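(* Let $\mathbb{K}$ be either $\mathbb{R}$ or $\mathbb{C}$, with all coefficients and solutions taken in $\mathbb{K}$. Let $(p,q)$ be a conjugate pair. Let $I$ be an infinite set. For all $i \in I$, let $\mathbf{a}_i = (a_{i,j})_{j=1}^{\infty} \in \ell^p$, let $b_i \in \mathbb{K}$, and consider the linear equation in infinitely many variables \[ L_i(\mathbf{x}) = \sum_{j=1}^{\infty} a_{i,j} x_j = b_i. \] Let $M>0$. Suppose that for every finite subset $S$ of $I$ and every $\varepsilon>0$, the finite set of inequalities $\{ |L_i(\mathbf{x}) - b_i| \le \varepsilon : i \in S\}$ has a solution $\mathbf{x}_{S,\varepsilon} \in \ell^q$ with $\|\mathbf{x}_{S,\varepsilon}\|_q \le M$. Then the infinite set of linear equations $\{L_i(\mathbf{x}) = b_i : i \in I\}$ has an exact solution $\mathbf{x} \in \ell^q$ with $\|\mathbf{x}\|_q \le M$.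
   Context: A pair $(p,q)$ is called a conjugate pair if either $p>1$, $q>1$ are real numbers with $1/p + 1/q = 1$, or $p=1$ and $q=\infty$. For $1\le p<\infty$, $\ell^p$ is the space of sequences $\mathbf{a}=(a_j)_{j\ge1}$ with $\|\mathbf{a}\|_p = (\sum_j |a_j|^p)^{1/p}<\infty$, and $\ell^\infty$ is the space of bounded sequences with $\|\mathbf{a}\|_\infty = \sup_j |a_j|$. For $\mathbf{a}\in\ell^p$, $\mathbf{x}\in\ell^q$ the series $\sum_j a_j x_j$ converges absolutely by Hölder's inequality. *)

(* Defs.v *)
From Stdlib Require Import Reals.
From Coquelicot Require Import Coquelicot.
Open Scope R_scope.

(* t^r for t >= 0, r > 0, with the convention 0^r = 0 *)
Definition rpow (t r : R) : R :=
  if Req_EM_T t 0 then 0 else Rpower t r.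

(* Exponents: p is a real number, q is in [1, +oo] (p_infty encodes q = oo). *)
Definition conjugate_pair (p : R) (q : Rbar) : Prop :=
  (1 < p /\ exists q' : R, q = Finite q' /\ 1 < q' /\ / p + / q' = 1)
  \/ (p = 1 /\ q = p_infty).

Definition in_lp {K : AbsRing} (r : Rbar) (x : nat -> K) : Prop :=
  match r with
  | Finite r' => ex_series (fun j => rpow (abs (x j)) r')
  | _ => exists B : R, forall j, abs (x j) <= B
  end.

(* the l^r norm (meaningful for x in l^r) *)
Definition lp_norm {K : AbsRing} (r : Rbar) (x : nat -> K) : R :=
  match r with
  | Finite r' => rpow (Series (fun j => rpow (abs (x j)) r')) (/ r')
  | _ => real (Sup_seq (fun j => Finite (abs (x j))))
  end.

Definition lin_sum_is {K : AbsRing} (a x : nat -> K) (l : K) : Prop :=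
  @is_series K (AbsRing_NormedModule K) (fun j => mult (a j) (x j)) l.

(* Main.v *)
Require Import Defs.
From Stdlib Require Import Reals List.
From Coquelicot Require Import Coquelicot.
From Stdlib Require Import Lra Lia Arith.
Open Scope R_scope.

Lemma rpow_0 r : rpow 0 r = 0.
Proof. unfold rpow; destruct (Req_EM_T 0 0); [reflexivity|congruence]. Qed.

Lemma rpow_pos t r : 0 < t -> rpow t r = Rpower t r.
Proof. intro h; unfold rpow; destruct (Req_EM_T t 0); [lra|reflexivity]. Qed.

Lemma rpow_ge0 t r : 0 <= rpow t r.
Proof. unfold rpow; destruct (Req_EM_T t 0); [lra|]. unfold Rpower; left; apply exp_pos. Qed.

Lemma rpow_gt0 t r : 0 < t -> 0 < rpow t r.
Proof. intro h; rewrite rpow_pos by lra. unfold Rpower; apply exp_pos. Qed.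

Lemma rpow_le s t r : 0 < r -> 0 <= s <= t -> rpow s r <= rpow t r.
Proof.
  intros hr [hs hst]. destruct (Req_dec s 0) as [->|hs0].
  - rewrite rpow_0; apply rpow_ge0.
  - rewrite !rpow_pos by lra. apply Rle_Rpower_l; lra.
Qed.

Lemma rpow_lt s t r : 0 < r -> 0 <= s < t -> rpow s r < rpow t r.
Proof.
  intros hr [hs hst]. destruct (Req_dec s 0) as [->|hs0].
  - rewrite rpow_0; apply rpow_gt0; lra.
  - rewrite !rpow_pos by lra. apply Rlt_Rpower_l; lra.
Qed.

Lemma rpow_le_inv s t r : 0 < r -> 0 <= s -> 0 <= t -> rpow s r <= rpow t r -> s <= t.
Proof.
  intros hr hs ht h. destruct (Rle_lt_dec s t) as [|hlt]; [assumption|].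
  exfalso. pose proof (rpow_lt t s r hr (conj ht hlt)). lra.
Qed.

Lemma rpow_1 t : 0 <= t -> rpow t 1 = t.
Proof.
  intro h. destruct (Req_dec t 0) as [->|h0]. apply rpow_0.
  rewrite rpow_pos by lra. apply Rpower_1; lra.
Qed.

Lemma rpow_inv t r : r <> 0 -> 0 <= t -> rpow (rpow t r) (/ r) = t.
Proof.
  intros hr ht. destruct (Req_dec t 0) as [->|h0]. rewrite !rpow_0; reflexivity.
  rewrite (rpow_pos t) by lra. rewrite rpow_pos by (unfold Rpower; apply exp_pos).
  rewrite Rpower_mult. rewrite Rinv_r by assumption. apply Rpower_1; lra.
Qed.

Lemma rpow_mult s t r : 0 <= s -> 0 <= t -> rpow (s * t) r = rpow s r * rpow t r.
Proof.
  intros hs ht. destruct (Req_dec s 0) as [->|h0]. rewrite Rmult_0_l, !rpow_0; ring.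
  destruct (Req_dec t 0) as [->|h1]. rewrite Rmult_0_r, !rpow_0; ring.
  rewrite !rpow_pos by nra. rewrite Rpower_mult_distr by lra. reflexivity.
Qed.

Lemma rpow_div s T r : 0 <= s -> 0 < T -> rpow (s / T) r = rpow s r / rpow T r.
Proof.
  intros hs hT. assert (hi : 0 < / T) by (apply Rinv_0_lt_compat; lra).
  unfold Rdiv. rewrite rpow_mult by lra.
  f_equal. rewrite !rpow_pos by lra.
  unfold Rpower. rewrite ln_Rinv by lra. rewrite <- exp_Ropp. f_equal; ring.
Qed.

Lemma rpow_lsc t0 r eps : 0 < r -> 0 <= t0 -> 0 < eps ->
  exists d, 0 < d /\ forall t, 0 <= t -> t0 - d < t -> rpow t0 r <= rpow t r + eps.
Proof.
  intros hr ht0 he.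
  destruct (Rle_lt_dec (rpow t0 r - eps) 0) as [hle|hgt].
  - exists 1; split; [lra|]. intros t ht _. pose proof (rpow_ge0 t r); lra.
  - set (s := rpow (rpow t0 r - eps) (/ r)).
    assert (hs0 : 0 <= s) by apply rpow_ge0.
    assert (hss : rpow s r = rpow t0 r - eps).
    { unfold s. pose proof (rpow_inv (rpow t0 r - eps) (/ r)) as h.
      rewrite Rinv_inv in h. apply h. apply Rinv_neq_0_compat; lra. lra. }
    assert (hst : s < t0).
    { destruct (Rlt_le_dec s t0) as [|hh]; [assumption|].
      pose proof (rpow_le t0 s r hr (conj ht0 hh)). lra. }
    exists (t0 - s); split; [lra|]. intros t ht hlt.
    assert (hst' : s <= t) by lra.
    pose proof (rpow_le s t r hr (conj hs0 hst')). lra.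
Qed.

Lemma exp_convex t A B : 0 <= t <= 1 ->
  exp (t * A + (1 - t) * B) <= t * exp A + (1 - t) * exp B.
Proof.
  intros ht. set (m := t * A + (1 - t) * B).
  assert (hA : exp A = exp m * exp (A - m)) by (rewrite <- exp_plus; f_equal; ring).
  assert (hB : exp B = exp m * exp (B - m)) by (rewrite <- exp_plus; f_equal; ring).
  pose proof (exp_ineq1_le (A - m)). pose proof (exp_ineq1_le (B - m)).
  pose proof (exp_pos m).
  assert (e : t * (A - m) + (1 - t) * (B - m) = 0) by (unfold m; ring).
  rewrite hA, hB.
  assert (h1 : 0 <= t * exp m * (exp (A - m) - (1 + (A - m)))) by
    (apply Rmult_le_pos; [apply Rmult_le_pos; lra | lra]).
  assert (h2 : 0 <= (1 - t) * exp m * (exp (B - m) - (1 + (B - m)))) by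
    (apply Rmult_le_pos; [apply Rmult_le_pos; lra | lra]).
  assert (h3 : exp m * (t * (A - m) + (1 - t) * (B - m)) = 0) by (rewrite e; ring).
  nra.
Qed.

Lemma young p q u v : 1 < p -> 1 < q -> / p + / q = 1 -> 0 <= u -> 0 <= v ->
  u * v <= rpow u p / p + rpow v q / q.
Proof.
  intros hp hq hpq hu hv.
  assert (0 < / p) by (apply Rinv_0_lt_compat; lra).
  assert (0 < / q) by (apply Rinv_0_lt_compat; lra).
  pose proof (rpow_ge0 u p); pose proof (rpow_ge0 v q).
  destruct (Req_dec u 0) as [->|hu0].
  { rewrite Rmult_0_l. unfold Rdiv. nra. }
  destruct (Req_dec v 0) as [->|hv0].
  { rewrite Rmult_0_r. unfold Rdiv. nra. }
  rewrite !rpow_pos by lra. unfold Rpower.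
  pose proof (exp_convex (/ p) (p * ln u) (q * ln v)).
  replace (/ p * (p * ln u) + (1 - / p) * (q * ln v)) with (ln u + ln v) in H3.
  2:{ replace (1 - / p) with (/ q) by lra. field. lra. }
  rewrite exp_plus, !exp_ln in H3 by lra.
  replace (1 - / p) with (/ q) in H3 by lra. unfold Rdiv. lra.
Qed.
Lemma sum_nm_nonneg (a : nat -> R) n m : (forall k, 0 <= a k) -> 0 <= sum_n_m a n m.
Proof.
  intro h. pose proof (sum_n_m_le (fun _ => 0) a n m h) as h1.
  rewrite sum_n_m_const in h1. lra.
Qed.

Lemma sum_nm_le_sum_n (a : nat -> R) N m : (forall k, 0 <= a k) ->
  sum_n_m a N m <= sum_n a m.
Proof.
  intro h. destruct N as [|N]. { unfold sum_n. lra. }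
  destruct (Compare_dec.le_lt_dec (S N) m) as [hle|hlt].
  - unfold sum_n. rewrite (sum_n_m_Chasles a 0 N m) by lia.
    pose proof (sum_nm_nonneg a 0 N h). simpl. unfold plus; simpl. lra.
  - rewrite sum_n_m_zero by lia. unfold sum_n. apply (sum_nm_nonneg a 0 m h).
Qed.

Lemma sum_n_ge_last (a : nat -> R) n : (forall k, 0 <= a k) -> a n <= sum_n a n.
Proof.
  intro h. destruct n as [|n]. { rewrite sum_O. lra. }
  rewrite sum_Sn. unfold sum_n. pose proof (sum_nm_nonneg a 0 n h).
  unfold plus; simpl. lra.
Qed.

Lemma sum_nm_lin (f g : nat -> R) c1 c2 n m :
  sum_n_m (fun k => c1 * f k + c2 * g k) n m = c1 * sum_n_m f n m + c2 * sum_n_m g n m.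
Proof.
  pose proof (sum_n_m_plus (fun k => c1 * f k) (fun k => c2 * g k) n m) as h0.
  unfold plus in h0; simpl in h0. rewrite h0.
  assert (h1 : sum_n_m (fun k => c1 * f k) n m = c1 * sum_n_m f n m) by exact (sum_n_m_mult_l c1 f n m).
  assert (h2 : sum_n_m (fun k => c2 * g k) n m = c2 * sum_n_m g n m) by exact (sum_n_m_mult_l c2 g n m).
  rewrite h1, h2. reflexivity.
Qed.

Lemma holder_fin (u v : nat -> R) n m p q A B :
  1 < p -> 1 < q -> / p + / q = 1 -> 0 < A -> 0 < B ->
  (forall k, 0 <= u k) -> (forall k, 0 <= v k) ->
  sum_n_m (fun k => rpow (u k) p) n m <= rpow A p ->
  sum_n_m (fun k => rpow (v k) q) n m <= rpow B q ->
  sum_n_m (fun k => u k * v k) n m <= A * B.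
Proof.
  intros hp hq hpq hA hB hu hv hsu hsv.
  pose proof (rpow_gt0 A p hA) as hAp. pose proof (rpow_gt0 B q hB) as hBq.
  set (c1 := A * B / (p * rpow A p)). set (c2 := A * B / (q * rpow B q)).
  assert (hterm : forall k, u k * v k <= c1 * rpow (u k) p + c2 * rpow (v k) q).
  { intro k. pose proof (young p q (u k / A) (v k / B) hp hq hpq) as hy.
    assert (0 <= u k / A) by (unfold Rdiv; apply Rmult_le_pos; [apply hu| left; apply Rinv_0_lt_compat; lra]).
    assert (0 <= v k / B) by (unfold Rdiv; apply Rmult_le_pos; [apply hv| left; apply Rinv_0_lt_compat; lra]).
    specialize (hy H H0).
    rewrite !rpow_div in hy by (auto; lra).
    replace (u k * v k) with (A * B * (u k / A * (v k / B))) by (field; lra).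
    replace (c1 * rpow (u k) p + c2 * rpow (v k) q) with
      (A * B * (rpow (u k) p / rpow A p / p + rpow (v k) q / rpow B q / q))
      by (unfold c1, c2; field; lra).
    apply Rmult_le_compat_l; [nra|exact hy]. }
  apply Rle_trans with (sum_n_m (fun k => c1 * rpow (u k) p + c2 * rpow (v k) q) n m).
  { apply sum_n_m_le. exact hterm. }
  rewrite sum_nm_lin.
  assert (0 <= c1) by (unfold c1; unfold Rdiv; apply Rmult_le_pos; [nra| left; apply Rinv_0_lt_compat; nra]).
  assert (0 <= c2) by (unfold c2; unfold Rdiv; apply Rmult_le_pos; [nra| left; apply Rinv_0_lt_compat; nra]).
  apply Rle_trans with (c1 * rpow A p + c2 * rpow B q).
  { apply Rplus_le_compat; apply Rmult_le_compat_l; assumption. }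
  unfold c1, c2. replace (A * B / (p * rpow A p) * rpow A p + A * B / (q * rpow B q) * rpow B q)
    with (A * B * (/ p + / q)) by (field; lra).
  rewrite hpq. lra.
Qed.

Definition Ball {K : AbsRing} (q : Rbar) (M : R) (x : nat -> K) : Prop :=
  match q with
  | Finite q' => forall n, sum_n (fun j => rpow (abs (x j)) q') n <= rpow M q'
  | _ => forall j, abs (x j) <= M
  end.

Definition Pcond {K : AbsRing} (p M e : R) (a : nat -> K) (b : K) (x : nat -> K) : Prop :=
  forall N T, 0 < T -> (forall m, sum_n_m (fun j => rpow (abs (a j)) p) (S N) m <= rpow T p) ->
    abs (minus (sum_n (fun j => mult (a j) (x j)) N) b) <= e + M * T.

Definition fclosed {K : AbsRing} (P : (nat -> K) -> Prop) : Prop :=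
  forall x, (forall (N : nat) (d : R), 0 < d -> exists y, P y /\
     forall j, (j <= N)%nat -> abs (minus (y j) (x j)) < d) -> P x.

Definition compactK (K : AbsRing) : Prop :=
  forall (J : Type) (P : J -> (nat -> K) -> Prop) (M : R),
  (forall j, fclosed (P j)) ->
  (forall L : list J, exists x, (forall n, abs (x n) <= M) /\ forall j, In j L -> P j x) ->
  exists x, forall j, P j x.

Lemma eps_conclude v c C : 0 <= C -> (forall d, 0 < d -> v <= c + C * d) -> v <= c.
Proof.
  intros hC h. destruct (Rle_lt_dec v c) as [|hlt]; [assumption|].
  exfalso. set (d := (v - c) / (2 * (C + 1))).
  assert (hd : 0 < d) by (unfold d; apply Rdiv_lt_0_compat; lra).
  specialize (h d hd).
  assert (C * d < v - c).
  { unfold d. replace (C * ((v - c) / (2 * (C + 1)))) with ((v - c) * (C / (2 * (C + 1)))) by (field; lra).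
    assert (C / (2 * (C + 1)) < 1). { apply Rmult_lt_reg_r with (2 * (C + 1)). lra.
      unfold Rdiv. rewrite Rmult_assoc, Rinv_l by lra. lra. }
    nra. }
  lra.
Qed.

Lemma fclosed_and {K : AbsRing} (P Q : (nat -> K) -> Prop) :
  fclosed P -> fclosed Q -> fclosed (fun x => P x /\ Q x).
Proof.
  intros hP hQ x H. split.
  - apply hP. intros N d hd. destruct (H N d hd) as [y [[Py Qy] hy]]. exists y; auto.
  - apply hQ. intros N d hd. destruct (H N d hd) as [y [[Py Qy] hy]]. exists y; auto.
Qed.

Lemma fclosed_imp {K : AbsRing} (A : Prop) (P : (nat -> K) -> Prop) :
  (A -> fclosed P) -> fclosed (fun x => A -> P x).
Proof.
  intros hP x H hA. apply (hP hA). intros N d hd. destruct (H N d hd) as [y [Py hy]].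
  exists y; auto.
Qed.

Lemma fclosed_forall {K : AbsRing} (I : Type) (P : I -> (nat -> K) -> Prop) :
  (forall i, fclosed (P i)) -> fclosed (fun x => forall i, P i x).
Proof.
  intros hP x H i. apply (hP i). intros N d hd. destruct (H N d hd) as [y [Py hy]].
  exists y; auto.
Qed.

Lemma abs_minus_tri {K : AbsRing} (x y z : K) :
  abs (minus x z) <= abs (minus x y) + abs (minus y z).
Proof. rewrite (minus_trans y). apply abs_triangle. Qed.

Lemma plus_minus_G {G : AbelianGroup} (x y : G) : plus y (minus x y) = x.
Proof. unfold minus. rewrite plus_comm, <- plus_assoc.
    transitivity (plus x zero). { f_equal. apply plus_opp_l. } apply plus_zero_r. Qed.

Lemma abs_le_tri {K : AbsRing} (x y : K) : abs x <= abs y + abs (minus x y).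
Proof.
  pose proof (abs_triangle y (minus x y)) as h.
  assert (e : plus y (minus x y) = x) by apply (@plus_minus_G (AbsRing.AbelianGroup K)).
  rewrite e in h. exact h.
Qed.

Lemma minus_plus_plus {G : AbelianGroup} (A a B b : G) :
  minus (plus A a) (plus B b) = plus (minus A B) (minus a b).
Proof.
  unfold minus. rewrite opp_plus.
  rewrite <- !plus_assoc. f_equal. rewrite (plus_comm a), <- plus_assoc. f_equal.
  apply plus_comm.
Qed.

Lemma minus_mult {K : Ring} (a x y : K) : minus (mult a x) (mult a y) = mult a (minus x y).
Proof. unfold minus. symmetry. transitivity (plus (mult a x) (mult a (opp y))).
  apply mult_distr_l. f_equal. symmetry. apply opp_mult_r. Qed.

Lemma diff_sum {K : AbsRing} (a x y : nat -> K) N d :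
  (forall j, (j <= N)%nat -> abs (minus (y j) (x j)) < d) ->
  abs (minus (sum_n (fun j => mult (a j) (x j)) N) (sum_n (fun j => mult (a j) (y j)) N))
   <= sum_n (fun j => abs (a j)) N * d.
Proof.
  assert (hm : forall j, abs (minus (y j) (x j)) < d ->
      abs (minus (mult (a j) (x j)) (mult (a j) (y j))) <= abs (a j) * d).
  { intros j hj. assert (e : minus (mult (a j) (x j)) (mult (a j) (y j)) = mult (a j) (minus (x j) (y j)))
      by apply (@minus_mult (AbsRing.Ring K)).
    rewrite e. eapply Rle_trans; [apply abs_mult|].
    apply Rmult_le_compat_l; [apply abs_ge_0|]. rewrite abs_minus. left; exact hj. }
  induction N as [|N IH]; intro h.
  - rewrite !sum_O. apply hm, h; lia.
  - assert (eR : sum_n (fun j => abs (a j)) (S N) = sum_n (fun j => abs (a j)) N + abs (a (S N)))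
      by (rewrite sum_Sn; reflexivity).
    rewrite eR, !sum_Sn.
    assert (e : forall A a B b : K, minus (plus A a) (plus B b) = plus (minus A B) (minus a b))
      by (intros; apply (@minus_plus_plus (AbsRing.AbelianGroup K))).
    rewrite e. eapply Rle_trans; [apply abs_triangle|].
    rewrite Rmult_plus_distr_r. apply Rplus_le_compat.
    + apply IH. intros j hj; apply h; lia.
    + apply hm, h; lia.
Qed.

Lemma sum_n_nonneg (a : nat -> R) n : (forall k, 0 <= a k) -> 0 <= sum_n a n.
Proof. intro h. apply sum_nm_nonneg, h. Qed.

Lemma fclosed_S {K : AbsRing} (a : nat -> K) (b : K) N c :
  fclosed (fun x => abs (minus (sum_n (fun j => mult (a j) (x j)) N) b) <= c).
Proof.
  intros x H. set (C := sum_n (fun j => abs (a j)) N).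
  assert (hC : 0 <= C) by (apply sum_n_nonneg; intro; apply abs_ge_0).
  apply (eps_conclude _ _ C hC). intros d hd.
  destruct (H N d hd) as [y [Py hy]].
  eapply Rle_trans; [apply (abs_minus_tri _ (sum_n (fun j => mult (a j) (y j)) N))|].
  pose proof (diff_sum a x y N d hy). fold C in H0.
  rewrite (Rplus_comm c). apply Rplus_le_compat; [exact H0 | exact Py].
Qed.

Lemma sum_n_plus_const (f : nat -> R) c n :
  sum_n (fun j => f j + c) n = sum_n f n + INR (S n) * c.
Proof.
  unfold sum_n. pose proof (sum_n_m_plus f (fun _ => c) 0 n) as h0.
  unfold plus in h0; simpl in h0. rewrite h0. rewrite sum_n_m_const.
  replace (S n - 0)%nat with (S n) by lia. reflexivity.
Qed.

Lemma fin_delta (P : nat -> R -> Prop) n :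
  (forall j d d', 0 < d' <= d -> P j d -> P j d') ->
  (forall j, (j <= n)%nat -> exists d, 0 < d /\ P j d) ->
  exists d, 0 < d /\ forall j, (j <= n)%nat -> P j d.
Proof.
  intros hmono h. induction n as [|n IH].
  - destruct (h 0%nat (le_n 0)) as [d [hd Pd]]. exists d; split; auto.
    intros j hj. replace j with 0%nat by lia. exact Pd.
  - destruct IH as [d1 [hd1 P1]]. { intros j hj; apply h; lia. }
    destruct (h (S n) (le_n _)) as [d2 [hd2 P2]].
    exists (Rmin d1 d2). split. { apply Rmin_glb_lt; auto. }
    intros j hj. destruct (Nat.eq_dec j (S n)) as [->|hne].
    + apply (hmono _ d2); [split; [apply Rmin_glb_lt; auto| apply Rmin_r]| exact P2].
    + apply (hmono _ d1); [split; [apply Rmin_glb_lt; auto| apply Rmin_l]| apply P1; lia].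
Qed.

Lemma sum_n_le_loc (f g : nat -> R) n : (forall k, (k <= n)%nat -> f k <= g k) ->
  sum_n f n <= sum_n g n.
Proof.
  induction n as [|n IH]; intro h.
  - rewrite !sum_O. apply h; lia.
  - rewrite !sum_Sn. apply Rplus_le_compat.
    + apply IH. intros k hk; apply h; lia.
    + apply h; lia.
Qed.

Lemma fclosed_Ball {K : AbsRing} (q : Rbar) M :
  (forall q', q = Finite q' -> 0 < q') -> fclosed (fun x : nat -> K => Ball q M x).
Proof.
  intros hq x H. destruct q as [q'| |]; simpl.
  - specialize (hq q' eq_refl). intro n.
    apply (eps_conclude _ _ (INR (S n))); [apply pos_INR|]. intros e he.
    destruct (fin_delta (fun j d => forall t, 0 <= t -> abs (x j) - d < t ->
               rpow (abs (x j)) q' <= rpow t q' + e) n) as [d [hd Hd]].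
    { intros j d d' hdd h t ht hlt. apply h; auto. lra. }
    { intros j _. destruct (rpow_lsc (abs (x j)) q' e hq (abs_ge_0 _) he) as [d [hd Hd]].
      exists d; split; auto. }
    destruct (H n d hd) as [y [Py hy]]. simpl in Py.
    eapply Rle_trans.
    { apply (sum_n_le_loc _ (fun j => rpow (abs (y j)) q' + e) n). intros k hk.
      apply Hd; auto. apply abs_ge_0. pose proof (abs_le_tri (x k) (y k)).
      rewrite abs_minus in H0. pose proof (hy k hk). lra. }
    rewrite sum_n_plus_const. specialize (Py n). lra.
  - intro j. apply (eps_conclude _ _ 1); [lra|]. intros d hd.
    destruct (H j d hd) as [y [Py hy]]. simpl in Py. specialize (Py j).
    pose proof (abs_le_tri (x j) (y j)). rewrite abs_minus in H0. pose proof (hy j (le_n _)). lra.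
  - intro j. apply (eps_conclude _ _ 1); [lra|]. intros d hd.
    destruct (H j d hd) as [y [Py hy]]. simpl in Py. specialize (Py j).
    pose proof (abs_le_tri (x j) (y j)). rewrite abs_minus in H0. pose proof (hy j (le_n _)). lra.
Qed.

Lemma abs_sum_le {K : AbsRing} (a x : nat -> K) n m :
  abs (sum_n_m (fun j => mult (a j) (x j)) n m) <= sum_n_m (fun j => abs (a j) * abs (x j)) n m.
Proof.
  eapply Rle_trans.
  { exact (norm_sum_n_m (K:=K) (V:=AbsRing_NormedModule K) (fun j => mult (a j) (x j)) n m). }
  apply sum_n_m_le. intro k. apply abs_mult.
Qed.

Lemma tail_bound {K : AbsRing} p q M (Hpq : conjugate_pair p q) (a x : nat -> K) n m T :
  0 < M -> 0 < T -> Ball q M x ->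
  sum_n_m (fun j => rpow (abs (a j)) p) n m <= rpow T p ->
  abs (sum_n_m (fun j => mult (a j) (x j)) n m) <= T * M.
Proof.
  intros hM hT hB ht. eapply Rle_trans; [apply abs_sum_le|].
  destruct Hpq as [[hp [q' [-> [hq hpq]]]] | [-> ->]].
  - apply (holder_fin _ _ n m p q' T M hp hq hpq hT hM); try (intro; apply abs_ge_0); auto.
    simpl in hB. eapply Rle_trans; [|apply (hB m)].
    apply sum_nm_le_sum_n. intro; apply rpow_ge0.
  - simpl in hB. eapply Rle_trans.
    { apply (sum_n_m_le _ (fun j => M * rpow (abs (a j)) 1)). intro k.
      rewrite rpow_1 by apply abs_ge_0. rewrite (Rmult_comm M).
      apply Rmult_le_compat_l; [apply abs_ge_0| apply hB]. }
    assert (e : sum_n_m (fun j => M * rpow (abs (a j)) 1) n m = M * sum_n_m (fun j => rpow (abs (a j)) 1) n m)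
      by exact (sum_n_m_mult_l M _ n m).
    rewrite e. rewrite rpow_1 in ht by lra. nra.
Qed.

Lemma sup_bound {K : AbsRing} (x : nat -> K) B : (forall j, abs (x j) <= B) ->
  exists s, Sup_seq (fun j => Finite (abs (x j))) = Finite s /\ (forall j, abs (x j) <= s) /\ s <= B.
Proof.
  intro hB. pose proof (Sup_seq_correct (fun j => Finite (abs (x j)))) as h.
  destruct (Sup_seq (fun j => Finite (abs (x j)))) as [s| |] eqn:E.
  - exists s; split; [reflexivity|]. split.
    + intro j. apply (eps_conclude _ _ 1); [lra|]. intros d hd.
      destruct (h (mkposreal d hd)) as [h1 _]. specialize (h1 j). simpl in h1. lra.
    + apply (eps_conclude _ _ 1); [lra|]. intros d hd.
      destruct (h (mkposreal d hd)) as [_ [n h2]]. simpl in h2. specialize (hB n). lra.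
  - exfalso. destruct (h B) as [n hn]. simpl in hn. specialize (hB n). lra.
  - exfalso. specialize (h (abs (x 0%nat)) 0%nat). simpl in h. lra.
Qed.

Lemma Ball_of_lp {K : AbsRing} p q M (Hpq : conjugate_pair p q) (x : nat -> K) :
  in_lp q x -> lp_norm q x <= M -> Ball q M x.
Proof.
  intros hin hn. destruct Hpq as [[hp [q' [-> [hq hpq]]]] | [-> ->]]; simpl in *.
  - intro n. set (u := fun j => rpow (abs (x j)) q') in *.
    assert (hs : is_lim_seq (sum_n u) (Series u)) by exact (Series_correct u hin).
    assert (h1 : sum_n u n <= Series u).
    { apply (is_lim_seq_incr_compare _ _ hs). intro k. rewrite sum_Sn.
      assert (0 <= u (S k)) by apply rpow_ge0. unfold plus; simpl. lra. }
    assert (h0 : 0 <= Series u).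
    { eapply Rle_trans; [|exact h1]. apply sum_n_nonneg. intro; apply rpow_ge0. }
    eapply Rle_trans; [exact h1|].
    assert (hq0 : / q' <> 0) by (apply Rinv_neq_0_compat; lra).
    pose proof (rpow_inv (Series u) (/ q') hq0 h0) as e. rewrite Rinv_inv in e.
    rewrite <- e. apply rpow_le; [lra|]. split; [apply rpow_ge0|exact hn].
  - destruct hin as [B hB]. destruct (sup_bound x B hB) as [s [e [h1 h2]]].
    rewrite e in hn. simpl in hn. intro j. specialize (h1 j). lra.
Qed.

Lemma lp_of_Ball {K : AbsRing} p q M (Hpq : conjugate_pair p q) (x : nat -> K) :
  0 < M -> Ball q M x -> in_lp q x /\ lp_norm q x <= M.
Proof.
  intros hM hB. destruct Hpq as [[hp [q' [-> [hq hpq]]]] | [-> ->]]; simpl in *.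
  - set (u := fun j => rpow (abs (x j)) q') in *.
    assert (hinc : forall k, sum_n u k <= sum_n u (S k)).
    { intro k. rewrite sum_Sn. assert (0 <= u (S k)) by apply rpow_ge0. unfold plus; simpl. lra. }
    pose proof (Lim_seq_correct _ (ex_lim_seq_incr _ hinc)) as hl.
    pose proof (is_lim_seq_le _ _ _ _ hB hl (is_lim_seq_const (rpow M q'))) as hle.
    assert (hge : Rbar_le 0 (Lim_seq (sum_n u))).
    { apply (is_lim_seq_le (fun _ => 0) (sum_n u)); [|apply is_lim_seq_const|exact hl].
      intro; apply sum_n_nonneg; intro; apply rpow_ge0. }
    destruct (Lim_seq (sum_n u)) as [l| |] eqn:E; simpl in hle, hge; try contradiction.
    assert (hs : is_series u l) by exact hl.
    split. { exists l; exact hs. }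
    rewrite (is_series_unique u l hs).
    assert (hq0 : q' <> 0) by lra.
    rewrite <- (rpow_inv M q' hq0) by lra.
    apply rpow_le. apply Rinv_0_lt_compat; lra. split; assumption.
  - split. { exists M; exact hB. }
    destruct (sup_bound x M hB) as [s [e [h1 h2]]]. rewrite e. simpl. exact h2.
Qed.

Lemma box_of_Ball {K : AbsRing} p q M (Hpq : conjugate_pair p q) (x : nat -> K) :
  0 < M -> Ball q M x -> forall n, abs (x n) <= M.
Proof.
  intros hM hB n. destruct Hpq as [[hp [q' [-> [hq hpq]]]] | [-> ->]]; simpl in *.
  - apply (rpow_le_inv _ _ q'); [lra|apply abs_ge_0|lra|].
    eapply Rle_trans; [|apply (hB n)].
    apply (sum_n_ge_last (fun j => rpow (abs (x j)) q')). intro; apply rpow_ge0.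
  - apply hB.
Qed.

Lemma eps_list {J : Type} (f : J -> R) (L : list J) :
  exists e, 0 < e /\ forall j, In j L -> 0 < f j -> e <= f j.
Proof.
  induction L as [|j L IH].
  - exists 1; split; [lra|]. intros j [].
  - destruct IH as [e [he H]].
    destruct (Rlt_dec 0 (f j)) as [hj|hj].
    + exists (Rmin e (f j)). split. { apply Rmin_glb_lt; auto. }
      intros k [<-|hk] hk0. { apply Rmin_r. } eapply Rle_trans; [apply Rmin_l|]. apply H; auto.
    + exists e; split; auto. intros k [<-|hk] hk0. { contradiction. } apply H; auto.
Qed.

Lemma partial_vs_limit {K : AbsRing} (f : nat -> K) (l : K) N C :
  @is_series K (AbsRing_NormedModule K) f l ->
  (forall m, abs (sum_n_m f (S N) m) <= C) ->
  abs (minus (sum_n f N) l) <= C.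
Proof.
  intros hs hC. apply (eps_conclude _ _ 1); [lra|]. intros d hd.
  destruct (proj1 (filterlim_locally _ _) hs (mkposreal d hd)) as [N0 H0].
  set (m := max N0 (S N)).
  specialize (H0 m (Nat.le_max_l _ _)). simpl in H0. unfold ball in H0; simpl in H0.
  unfold AbsRing_ball in H0.
  assert (e : sum_n_m f (S N) m = minus (sum_n f m) (sum_n f N)).
  { apply (@sum_n_m_sum_n (AbsRing.AbelianGroup K)). unfold m; lia. }
  specialize (hC m). rewrite e in hC.
  eapply Rle_trans; [apply (abs_minus_tri _ (sum_n f m))|].
  rewrite abs_minus in hC. rewrite Rmult_1_l. apply Rplus_le_compat; [exact hC | left; exact H0].
Qed.

Lemma series_from_Pcond {K : AbsRing} p M (a : nat -> K) (b : K) (x : nat -> K) :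
  0 < p -> 0 < M -> in_lp (Finite p) a ->
  (forall e, 0 < e -> Pcond p M e a b x) -> lin_sum_is a x b.
Proof.
  intros hp hM ha hP. unfold lin_sum_is. apply (proj2 (filterlim_locally _ _)).
  intro eps. destruct eps as [eps heps]. simpl.
  set (eta := eps / (4 * M)).
  assert (heta : 0 < eta) by (unfold eta; apply Rdiv_lt_0_compat; lra).
  pose proof (rpow_gt0 eta p heta) as hrp.
  simpl in ha.
  destruct (Cauchy_ex_series (K:=R_AbsRing) (V:=R_CompleteNormedModule) _ ha (mkposreal _ hrp)) as [N0 HN0].
  exists N0. intros N hN. unfold ball; simpl. unfold AbsRing_ball.
  assert (ht : forall m, sum_n_m (fun j => rpow (abs (a j)) p) (S N) m <= rpow eta p).
  { intro m. destruct (Compare_dec.le_lt_dec (S N) m) as [hm|hm].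
    - specialize (HN0 (S N) m ltac:(lia) ltac:(lia)). simpl in HN0.
      eapply Rle_trans; [apply Rle_abs|]. left; exact HN0.
    - rewrite sum_n_m_zero by lia. left; exact hrp. }
  assert (he : 0 < eps / 4) by lra.
  pose proof (hP (eps / 4) he N eta heta ht) as h.
  assert (e : M * eta = eps / 4) by (unfold eta; field; lra).
  rewrite e in h. eapply Rle_lt_trans; [exact h|]. lra.
Qed.

Lemma fclosed_Pcond {K : AbsRing} p M e (a : nat -> K) b :
  fclosed (fun x => Pcond p M e a b x).
Proof.
  unfold Pcond.
  apply (fclosed_forall nat (fun N x => forall T, 0 < T -> _ -> _)). intro N.
  apply (fclosed_forall R (fun T x => 0 < T -> _ -> _)). intro T.
  apply fclosed_imp. intro hT. apply fclosed_imp. intro ht.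
  apply fclosed_S.
Qed.

Lemma main_generic (K : AbsRing) (HK : compactK K)
  (p : R) (q : Rbar) (Hpq : conjugate_pair p q)
  (I : Type) (Hinf : forall S : list I, exists i : I, ~ In i S)
  (a : I -> nat -> K) (Ha : forall i, in_lp (Finite p) (a i))
  (b : I -> K) (M : R) (HM : 0 < M)
  (Happrox : forall (S : list I) (eps : R), 0 < eps ->
     exists x : nat -> K, in_lp q x /\ lp_norm q x <= M /\
       forall i, In i S -> exists l : K, lin_sum_is (a i) x l /\ abs (minus l (b i)) <= eps) :
  exists x : nat -> K, in_lp q x /\ lp_norm q x <= M /\
    forall i : I, lin_sum_is (a i) x (b i).
Proof.
  assert (hq : forall q', q = Finite q' -> 0 < q').
  { intros q' ->. destruct Hpq as [[_ [q'' [e [h _]]]] | [_ e]]; [injection e; intros ->; lra| discriminate]. }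
  assert (hp : 0 < p) by (destruct Hpq as [[h _]|[h _]]; lra).
  set (Q := fun (ie : I * R) (x : nat -> K) => Ball q M x /\
              (0 < snd ie -> Pcond p M (snd ie) (a (fst ie)) (b (fst ie)) x)).
  destruct (HK (I * R)%type Q M) as [x Hx].
  - intro ie. unfold Q. apply fclosed_and.
    + apply fclosed_Ball, hq.
    + apply fclosed_imp. intros _. apply fclosed_Pcond.
  - intro L. destruct (eps_list snd L) as [eps [heps Heps]].
    destruct (Happrox (map fst L) eps heps) as [x [hin [hn hS]]].
    pose proof (Ball_of_lp p q M Hpq x hin hn) as hB.
    exists x. split. { apply (box_of_Ball p q M Hpq x HM hB). }
    intros [i e] hie. split; [exact hB|]. simpl. intros he N T hT ht.
    destruct (hS i (in_map fst _ (i, e) hie)) as [l [hl hlb]].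
    pose proof (Heps (i, e) hie he) as hee. simpl in hee.
    assert (h1 : abs (minus (sum_n (fun j => mult (a i j) (x j)) N) l) <= T * M).
    { apply partial_vs_limit; [exact hl|]. intro m.
      apply (tail_bound p q M Hpq); auto. }
    eapply Rle_trans; [apply (abs_minus_tri _ l)|].
    rewrite (Rplus_comm e), (Rmult_comm M).
    apply Rplus_le_compat; [exact h1| eapply Rle_trans; [exact hlb| exact hee]].
  - destruct (Hinf nil) as [i0 _].
    assert (hB : Ball q M x) by exact (proj1 (Hx (i0, 1))).
    destruct (lp_of_Ball p q M Hpq x HM hB) as [h1 h2].
    exists x. split; [exact h1|]. split; [exact h2|].
    intro i. apply (series_from_Pcond p M (a i) (b i) x hp HM (Ha i)).
    intros e he. exact (proj2 (Hx (i, e)) he).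
Qed.

From HB Require Import structures.
From mathcomp Require all_boot all_order ssralg ssrnum interval.
From mathcomp Require boolp classical_sets filter reals topology function_spaces normedtype.
From mathcomp Require Rstruct Rstruct_topology.
Module MC.
Import all_boot all_order ssralg ssrnum interval.
Import Order.TTheory GRing.Theory Num.Theory.
Import boolp classical_sets filter reals topology function_spaces normedtype.
Import Rstruct Rstruct_topology.
Import ArrowAsProduct.
Local Open Scope classical_set_scope.
Local Open Scope R_scope.

Lemma nbhs_proj (T : topologicalType) (x : nat -> T) k (V : set T) :
  nbhs (x k) V -> nbhs x [set y | V (y k)].
Proof. move=> h; exact: (@proj_continuous nat (fun _ => T) k x _ h). Qed.

Lemma nbhs_box (T : topologicalType) (dist : T -> T -> R)
  (Hd : forall t (d : R), 0 < d -> nbhs t [set z | dist z t < d])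
  (x : nat -> T) (N : nat) (d : R) (hd : 0 < d) :
  nbhs x [set y | forall k, (k <= N)%coq_nat -> dist (y k) (x k) < d].
Proof.
have FF : Filter (nbhs x) := nbhs_filter x.
elim: N => [|N IH].
  have h := @nbhs_proj T x O _ (Hd (x O) d hd).
  have sub : [set y | [set z | dist z (x O) < d] (y O)] `<=` [set y | forall k, (k <= O)%coq_nat -> dist (y k) (x k) < d].
    move=> y /= H k Hk.
    by have -> : k = O by inversion Hk.
  exact: (@filterS _ (nbhs x) _ _ _ sub h).
have h := @filterI _ (nbhs x) FF _ _ IH (@nbhs_proj T x N.+1 _ (Hd (x N.+1) d hd)).
refine (@filterS _ (nbhs x) _ _ _ _ h).
move=> y /= [H3 H4] k Hk.
inversion Hk; subst; first exact: H4.
by apply: H3.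
Qed.

Lemma compact_fip (T : topologicalType) (A : set T) (hA : compact A) (J : Type)
  (Q : J -> (nat -> T) -> Prop)
  (Hcl : forall j x, (forall U, nbhs x U -> exists y, Q j y /\ U y) -> Q j x)
  (Hfip : forall L : list J, exists x, (forall n, A (x n)) /\ forall j, List.In j L -> Q j x) :
  exists x, forall j, Q j x.
Proof.
have hC := @tychonoff nat (fun _ => T) (fun _ => A) (fun _ => hA).
pose B (L : list J) := [set x : nat -> T | (forall n, A (x n)) /\ forall j, List.In j L -> Q j x].
pose F := filter_from setT B.
have FF : Filter F.
  apply: filter_from_filter; first by exists nil.
  move=> L1 L2 _ _; exists (L1 ++ L2) => // x [H1 H2]; split; split => // j Hj;
  apply: H2; apply List.in_or_app; tauto.
have PF : ProperFilter F.
  apply: filter_from_proper => // L _; have [x Hx] := Hfip L; by exists x.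
have FA : F [set f : nat -> T | forall i, A (f i)].
  by exists nil => // x [].
have [x [Ax clx]] := hC F PF FA.
exists x => j; apply: Hcl => U HU.
have [y [[_ Hy] Uy]] := clx (B (j :: nil)) U (ex_intro2 _ _ (j :: nil) I (fun _ h => h)) HU.
exists y; split => //; apply: Hy; by left.
Qed.

Lemma nbhsR (t d : R) : 0 < d -> nbhs t [set z | Rabs (z - t) < d].
Proof.
move=> hd; have h0 : (0 < d)%R by apply/RltP.
have := @nbhsx_ballx _ R t d h0.
apply: filterS => z; rewrite /ball /= => /RltP h.
rewrite Rabs_minus_sym RabsE RminusE; exact h.
Qed.

Lemma compactR : compactK R_AbsRing.
Proof.
move=> J P M Hcl Hfip.
have hA : compact [set z : R | Rabs z <= M].
  have -> : [set z : R | Rabs z <= M] = [set z | z \in (Interval (BLeft (Ropp M)) (BRight M) : interval R)].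
    apply/seteqP; split => z /=; rewrite in_itv /=.
      by move=> h; apply/andP; split; apply/RleP; move: h; split_Rabs; lra.
    by move/andP => [/RleP h1 /RleP h2]; move: h1 h2; split_Rabs; lra.
  exact: segment_compact.
apply: (@compact_fip R _ hA J P).
  move=> j x H; apply: Hcl => N d hd.
  have Hn := @nbhs_box R (fun z t => Rabs (z - t)) nbhsR x N d hd.
  have [y [Py Uy]] := H _ Hn.
  by exists y.
by [].
Qed.

Lemma sqrt2_lt2 : sqrt 2 < 2.
Proof.
have h : sqrt 2 < sqrt 4 by apply: sqrt_lt_1; lra.
have e : sqrt 4 = 2 by rewrite (_ : 4 = 2 * 2); [apply: sqrt_square; lra | lra].
lra.
Qed.

Lemma nbhsC (t : C) (d : R) : 0 < d -> @nbhs _ (R * R)%type t [set z | Cmod (Cminus z t) < d].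
Proof.
move=> hd.
have hd2 : 0 < d / 2 by lra.
exists ([set a | Rabs (a - t.1) < d / 2], [set b | Rabs (b - t.2) < d / 2]).
  by split; apply: nbhsR.
case=> a b /= [h1 h2].
apply: Rle_lt_trans; first exact: Cmod_2Rmax.
have hs := sqrt2_lt2.
have hp : 0 <= sqrt 2 by apply: sqrt_pos.
rewrite /=.
have hm : Rmax (Rabs (a + - t.1)) (Rabs (b + - t.2)) < d / 2.
  by apply: Rmax_lub_lt.
have hm0 : 0 <= Rmax (Rabs (a + - t.1)) (Rabs (b + - t.2)).
  apply: Rle_trans (Rmax_l _ _); apply: Rabs_pos.
nra.
Qed.

Lemma compactC : compactK C_AbsRing.
Proof.
move=> J P M Hcl Hfip.
have hA1 : compact [set z : R | Rabs z <= M].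
  have -> : [set z : R | Rabs z <= M] = [set z | z \in (Interval (BLeft (Ropp M)) (BRight M) : interval R)].
    apply/seteqP; split => z /=; rewrite in_itv /=.
      by move=> h; apply/andP; split; apply/RleP; move: h; split_Rabs; lra.
    by move/andP => [/RleP h1 /RleP h2]; move: h1 h2; split_Rabs; lra.
  exact: segment_compact.
have hA := compact_setX hA1 hA1.
apply: (@compact_fip (R * R)%type _ hA J P).
  move=> j x H; apply: Hcl => N d hd.
  have Hn := @nbhs_box (R * R)%type (fun z t => Cmod (Cminus z t)) nbhsC x N d hd.
  have [y [Py Uy]] := H _ Hn.
  by exists y.
move=> L; have [x [Hx1 Hx2]] := Hfip L; exists x; split => // n.
have := Hx1 n; rewrite /abs /= => h; split.
  exact: Rle_trans (re_le_Cmod _) h.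
exact: Rle_trans (Rle_trans _ _ _ (Rmax_r _ _) (Rmax_Cmod _)) h.
Qed.

End MC.

Theorem theorem2 (K : AbsRing) (HK : K = R_AbsRing \/ K = C_AbsRing)
  (p : R) (q : Rbar) (Hpq : conjugate_pair p q)
  (I : Type) (Hinf : forall S : list I, exists i : I, ~ In i S)
  (a : I -> nat -> K) (Ha : forall i, in_lp (Finite p) (a i))
  (b : I -> K) (M : R) (HM : 0 < M)
  (Happrox : forall (S : list I) (eps : R), 0 < eps ->
     exists x : nat -> K, in_lp q x /\ lp_norm q x <= M /\
       forall i, In i S -> exists l : K, lin_sum_is (a i) x l /\ abs (minus l (b i)) <= eps) :
  exists x : nat -> K, in_lp q x /\ lp_norm q x <= M /\
    forall i : I, lin_sum_is (a i) x (b i).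
Proof.
  destruct HK as [e|e]; subst K.
  - exact (main_generic R_AbsRing MC.compactR p q Hpq I Hinf a Ha b M HM Happrox).
  - exact (main_generic C_AbsRing MC.compactC p q Hpq I Hinf a Ha b M HM Happrox).
Qed.
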